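(* Let $\mathbf a:\mathbb{R}^d\to\mathbb{R}^n$ be differentiable, let $z_1,\dots,z_n$ be independent real noises with common differentiable cdf $F$, and let $x_i=\mathrm{sign}(a_i(\boldsymbol\phi)-z_i)\in\{-1,1\}$, so that $P(x_i=1)=F(a_i(\boldsymbol\phi))$ independently. Let $\mathcal L:\mathbb{R}^n\to\mathbb{R}$ be multilinear, i.e., affine in each coordinate $x_i$ when the other coordinates are fixed. Define the straight-through estimator $$\hat{\mathbf g}(\mathbf x)=\sum_{i=1}^n 2F'(a_i(\boldsymbol\phi))\,\nabla_{\boldsymbol\phi}a_i(\boldsymbol\phi)\,\frac{\partial\mathcal L(\mathbf x)}{\partial x_i}.$$ Then $\hat{\mathbf g}$ is unbiased: $\mathbb{E}_{\mathbf x}[\hat{\mathbf g}(\mathbf x)]=\nabla_{\boldsymbol\phi}\mathbb{E}_{\mathbf x}[\mathcal L(\mathbf x)]$. *)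

(* Defs.v *)
From HB Require Import structures.
From mathcomp Require Import all_boot all_order all_algebra.
From mathcomp Require Import all_classical all_reals all_analysis.
Set Implicit Arguments. Unset Strict Implicit. Unset Printing Implicit Defensive.
Import Order.TTheory GRing.Theory Num.Theory.
Import numFieldNormedType.Exports.
Local Open Scope ring_scope.
Local Open Scope classical_set_scope.

Definition is_cdf (R : realType) (F : R -> R) : Prop :=
  [/\ {homo F : x y / x <= y},
      F x @[x --> -oo] --> (0 : R),
      F x @[x --> +oo] --> (1 : R) &
      forall x : R, F @ at_right x --> F x].

Definition multilinear (R : realType) (n : nat) (L : 'rV[R]_n -> R) : Prop :=
  forall (i : 'I_n) (x : 'rV[R]_n), exists alpha beta : R,
    forall t : R, L (\row_k (if k == i then t else x ord0 k)) = alpha * t + beta.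

Definition sgn_vec (R : realType) (n : nat) (b : {ffun 'I_n -> bool}) : 'rV[R]_n :=
  \row_i (if b i then 1 else -1).

Definition bern_weight (R : realType) (n : nat) (p : 'I_n -> R)
    (b : {ffun 'I_n -> bool}) : R :=
  \prod_(i < n) (if b i then p i else 1 - p i).

(* E_x[G(x)] for x_i in {-1,1} independent with P(x_i = 1) = p i. *)
Definition expect (R : realType) (n : nat) (p : 'I_n -> R) (G : 'rV[R]_n -> R) : R :=
  \sum_(b : {ffun 'I_n -> bool}) @bern_weight R n p b * G (@sgn_vec R n b).

(* P(x_i = 1) = F (a_i phi) where x_i = sign(a_i(phi) - z_i), z_i ~ F. *)
Definition prob_one (R : realType) (d n : nat) (a : 'rV[R]_d -> 'rV[R]_n)
    (F : R -> R) (phi : 'rV[R]_d) : 'I_n -> R :=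
  fun i => F (a phi ord0 i).

Definition ste (R : realType) (d n : nat) (a : 'rV[R]_d -> 'rV[R]_n) (F : R -> R)
    (L : 'rV[R]_n -> R) (phi : 'rV[R]_d) (j : 'I_d) (x : 'rV[R]_n) : R :=
  \sum_(i < n) 2 * derive1 F (a phi ord0 i)
      * 'D_(delta_mx ord0 j) (fun psi => a psi ord0 i) phi
      * 'D_(delta_mx ord0 i) L x.

(* Main.v *)
Require Import Defs.
From HB Require Import structures.
From mathcomp Require Import all_boot all_order all_algebra.
From mathcomp Require Import all_classical all_reals all_analysis.
From mathcomp Require Import ring lra.
Import Order.TTheory GRing.Theory Num.Theory.
Import numFieldNormedType.Exports.
Local Open Scope ring_scope.
Lemma is_derive_bigsum (R : realType) (V : normedModType R) (I : eqType)
  (s : seq I) (P : pred I) (h : I -> V -> R) (dh : I -> R) (x v : V) :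
  (forall i, P i -> is_derive x v (h i) (dh i)) ->
  is_derive x v (fun y => \sum_(i <- s | P i) h i y) (\sum_(i <- s | P i) dh i).
Proof.
move=> H; elim: s => [|c s IH].
  have -> : (fun y => \sum_(i <- [::] | P i) h i y) = cst 0.
    by apply/funext => y; rewrite big_nil.
  rewrite big_nil; exact: is_derive_cst.
rewrite big_cons.
have -> : (fun y => \sum_(i <- c :: s | P i) h i y) =
  (fun y => if P c then h c y + \sum_(i <- s | P i) h i y else \sum_(i <- s | P i) h i y).
  by apply/funext => y; rewrite big_cons.
case Pc: (P c) => //.
exact: is_deriveD (H c Pc) IH.
Qed.

Lemma is_derive_bigprod (R : realType) (V : normedModType R) (I : eqType)
  (s : seq I) (h : I -> V -> R) (dh : I -> R) (x v : V) : uniq s ->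
  (forall i, is_derive x v (h i) (dh i)) ->
  is_derive x v (fun y => \prod_(i <- s) h i y)
    (\sum_(i <- s) dh i * \prod_(k <- s | k != i) h k x).
Proof.
move=> + H; elim: s => [|c s IH].
  have -> : (fun y => \prod_(i <- [::]) h i y) = cst 1.
    by apply/funext => y; rewrite big_nil.
  rewrite big_nil => _; exact: is_derive_cst.
move=> /= /andP[cs us].
have -> : (fun y => \prod_(i <- c :: s) h i y) =
  (h c * (fun y => \prod_(i <- s) h i y)).
  by apply/funext => y; rewrite big_cons.
apply: is_derive_eq; first exact: is_deriveM (H c) (IH us).
rewrite big_cons big_cons eqxx /=.
have -> : \prod_(k <- s | k != c) h k x = \prod_(k <- s) h k x.
  rewrite -big_filter; congr bigop; apply/all_filterP/allP => k ks.
  by apply/eqP => kc; rewrite -kc ks in cs.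
rewrite addrC mulrC; congr (_ + _).
rewrite /GRing.scale /= big_distrr /=; apply: eq_big_seq => i is_.
rewrite big_cons (_ : c != i); last by apply/eqP => ci; rewrite ci is_ in cs.
by rewrite mulrCA.
Qed.

Lemma chain_is_derive (R : realType) (V : normedModType R) (f : V -> R)
  (F : R -> R) (x v : V) :
  differentiable f x -> derivable F (f x) 1 ->
  is_derive x v (fun y => F (f y)) (derive1 F (f x) * 'D_v f x).
Proof.
move=> df /derivable1_diffP dF.
have dc : differentiable (F \o f) x by exact: differentiable_comp.
apply: DeriveDef; first exact: diff_derivable.
rewrite (deriveE _ dc) diff_comp // (deriveE _ df) derive1E' //= mulrC.
by rewrite -[X in 'd  _ _ X = _]mulr1 [LHS]linearZ.
Qed.
Definition flipb (n : nat) (i : 'I_n) (b : {ffun 'I_n -> bool}) : {ffun 'I_n -> bool} :=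
  [ffun k => if k == i then ~~ b k else b k].

Arguments flipb {n}.

Lemma flipbK n (i : 'I_n) : involutive (flipb i).
Proof.
move=> b; apply/ffunP => k; rewrite !ffunE.
by case: eqP => // ->; rewrite negbK.
Qed.

Lemma flipb_i n (i : 'I_n) b : flipb i b i = ~~ b i.
Proof. by rewrite ffunE eqxx. Qed.

Lemma flipb_k n (i k : 'I_n) b : k != i -> flipb i b k = b k.
Proof. by move=> /negbTE ki; rewrite ffunE ki. Qed.

Lemma sum_flip (R : realType) n (i : 'I_n) (G : {ffun 'I_n -> bool} -> R) :
  \sum_(b : {ffun 'I_n -> bool}) G b = \sum_(b : {ffun 'I_n -> bool}) G (flipb i b).
Proof. by rewrite (reindex_inj (can_inj (@flipbK n i))). Qed.

Lemma flip_key (R : realType) n (i : 'I_n) (p c : R)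
  (Q A B Lb : {ffun 'I_n -> bool} -> R) :
  (forall b, Q (flipb i b) = Q b) ->
  (forall b, A (flipb i b) = A b) ->
  (forall b, B (flipb i b) = B b) ->
  (forall b, Lb b = A b * (if b i then 1 else -1) + B b) ->
  \sum_(b : {ffun 'I_n -> bool}) (if b i then 1 else -1) * c * Q b * Lb b =
  \sum_(b : {ffun 'I_n -> bool}) ((if b i then p else 1 - p) * Q b) * (2 * c * A b).
Proof.
move=> HQ HA HB HL.
have E1 : \sum_(b : {ffun 'I_n -> bool}) (if b i then 1 else -1) * c * Q b * Lb b =
   \sum_(b : {ffun 'I_n -> bool}) c * Q b * A b + \sum_(b : {ffun 'I_n -> bool}) (if b i then 1 else -1) * c * Q b * B b.
  rewrite -big_split /=; apply: eq_bigr => b _; rewrite HL.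
  by case: (b i); rewrite /=; ring.
have E2 : \sum_(b : {ffun 'I_n -> bool}) (if b i then 1 else -1) * c * Q b * B b = 0.
  set T := LHS.
  have : T = - T.
    rewrite {1}/T (@sum_flip R n i) /T -sumrN; apply: eq_bigr => b _.
    by rewrite HQ HB flipb_i; case: (b i) => /=; ring.
  move/eqP; rewrite -subr_eq0 opprK -mulr2n -mulr_natr mulf_eq0 /=.
  by rewrite pnatr_eq0 orbF => /eqP.
rewrite E1 E2 addr0.
set K := fun b => c * Q b * A b.
have HK : forall b, K (flipb i b) = K b by move=> b; rewrite /K HQ HA.
have E3 : \sum_(b : {ffun 'I_n -> bool}) ((if b i then p else 1 - p) * Q b) * (2 * c * A b) =
   2 * \sum_(b : {ffun 'I_n -> bool}) (if b i then p else 1 - p) * K b.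
  rewrite big_distrr /=; apply: eq_bigr => b _; rewrite /K; ring.
have E4 : \sum_(b : {ffun 'I_n -> bool}) (if b i then p else 1 - p) * K b =
   \sum_(b : {ffun 'I_n -> bool}) (if ~~ b i then p else 1 - p) * K b.
  by rewrite (@sum_flip R n i); apply: eq_bigr => b _; rewrite HK flipb_i.
rewrite E3 -[2]/(1+1) mulrDl mul1r {2}E4 -big_split /=.
apply: eq_bigr => b _; rewrite /K; case: (b i) => /=; ring.
Qed.
Definition Lset (R : realType) n (L : 'rV[R]_n -> R) (i : 'I_n) (x : 'rV[R]_n) (t : R) :=
  L (\row_k (if k == i then t else x ord0 k)).

Arguments Lset {R n}.

Lemma Lset_affine (R : realType) n (L : 'rV[R]_n -> R) i x : multilinear L ->
  forall t, Lset L i x t = (Lset L i x 1 - Lset L i x 0) * t + Lset L i x 0.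
Proof.
move=> /(_ i x) [al [be H]] t; rewrite /Lset !H; ring.
Qed.

Lemma DL_eq (R : realType) n (L : 'rV[R]_n -> R) i x : multilinear L ->
  'D_(delta_mx ord0 i) L x = Lset L i x 1 - Lset L i x 0.
Proof.
move=> /Lset_affine H.
set al := Lset L i x 1 - Lset L i x 0.
set be := Lset L i x 0.
have key : forall h : R, L (h *: delta_mx ord0 i + x) = al * (h + x ord0 i) + be.
  move=> h; rewrite -H /Lset; congr L; apply/rowP => k; rewrite !mxE.
  by rewrite eqxx /=; case: eqP => [->|_]; rewrite ?mulr1 ?mulr0 ?add0r // addrC.
have -> : 'D_(delta_mx ord0 i) L x = 'D_1 (fun h : R => al * (h + x ord0 i) + be) 0.
  have Lx : L x = al * (0 + x ord0 i) + be by rewrite -key scale0r add0r.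
  rewrite /derive; 
  have E : (fun h : R => h^-1 *: ((L \o shift x) (h *: delta_mx ord0 i) - L x)) = (fun h : R => h^-1 *: (((fun h0 : R => al * (h0 + x ord0 i) + be) \o shift 0) h%:A - (al * (0 + x ord0 i) + be))).
    apply/funext => h /=.
    by rewrite /shift /= key Lx addr0 [h%:A]mulr1.
  by rewrite E.
have -> : (fun h : R => al * (h + x ord0 i) + be) = (al *: (@id R)) + cst (al * x ord0 i + be).
  by apply/funext => h; rewrite addrfctE scalrfctE /cst /= /GRing.scale /=; ring.
have HD : is_derive (0:R) 1 ((al *: (@id R)) + cst (al * x ord0 i + be)) (al *: 1 + 0).
  exact: is_deriveD.
by rewrite derive_val addr0 [al *: 1]mulr1.
Qed.

Theorem propositionB2 (R : realType) (d n : nat) (a : 'rV[R]_d -> 'rV[R]_n)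
    (F : R -> R) (L : 'rV[R]_n -> R) (phi : 'rV[R]_d) :
  (forall psi : 'rV[R]_d, differentiable a psi) ->
  is_cdf F ->
  (forall t : R, derivable F t 1) ->
  multilinear L ->
  forall j : 'I_d,
    derivable (fun psi => expect (prob_one a F psi) L) phi (delta_mx ord0 j) /\
    'D_(delta_mx ord0 j) (fun psi => expect (prob_one a F psi) L) phi
      = expect (prob_one a F phi) (ste a F L phi j).
Proof.
move=> da _ dF ML j.
set v := delta_mx ord0 j.
pose dp (i : 'I_n) := derive1 F (a phi ord0 i) * 'D_v (fun psi => a psi ord0 i) phi.
have Hp i : is_derive phi v (fun psi => F (a psi ord0 i)) (dp i).
  apply: (@chain_is_derive R _ (fun psi => a psi ord0 i)) => //.
  exact: (differentiable_comp (da phi) (differentiable_coord _ _ _)).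
pose w (i : 'I_n) (b : {ffun 'I_n -> bool}) psi :=
  if b i then F (a psi ord0 i) else 1 - F (a psi ord0 i).
pose s (i : 'I_n) (b : {ffun 'I_n -> bool}) : R := if b i then 1 else -1.
have Hw i b : is_derive phi v (w i b) (s i b * dp i).
  rewrite /w /s; case: (b i).
    by apply: is_derive_eq (Hp i) _; rewrite mul1r.
  have -> : (fun psi => 1 - F (a psi ord0 i)) = cst 1 - (fun psi => F (a psi ord0 i)).
    by apply/funext => psi; rewrite addrfctE opprfctE.
  have HH := is_deriveB (is_derive_cst (1:R) phi v) (Hp i).
  by rewrite mulN1r -[- dp i]sub0r; exact HH.
pose Q (i : 'I_n) (b : {ffun 'I_n -> bool}) := \prod_(k < n | k != i) w k b phi.
have HW b : is_derive phi v (fun psi => bern_weight (prob_one a F psi) b)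
    (\sum_(i < n) (s i b * dp i) * Q i b).
  exact: (@is_derive_bigprod R _ _ _ (fun i => w i b) (fun i => s i b * dp i) phi v
            (index_enum_uniq _) (fun i => Hw i b)).
have HE : is_derive phi v (fun psi => expect (prob_one a F psi) L)
    (\sum_(b : {ffun 'I_n -> bool}) (\sum_(i < n) (s i b * dp i) * Q i b) * L (@sgn_vec R n b)).
  apply: (@is_derive_bigsum R _ _ _ (fun _ => true)
    (fun b psi => bern_weight (prob_one a F psi) b * L (@sgn_vec R n b))) => b _.
  have HH := is_deriveM (HW b) (is_derive_cst (L (@sgn_vec R n b)) phi v).
  apply: is_derive_eq HH _.
  by rewrite scaler0 add0r /GRing.scale /= mulrC.
split; first by case: HE.
rewrite derive_val.
pose A (i : 'I_n) (b : {ffun 'I_n -> bool}) :=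
  Lset L i (@sgn_vec R n b) 1 - Lset L i (@sgn_vec R n b) 0.
pose B (i : 'I_n) (b : {ffun 'I_n -> bool}) := Lset L i (@sgn_vec R n b) 0.
have HR b : bern_weight (prob_one a F phi) b * ste a F L phi j (@sgn_vec R n b) =
    \sum_(i < n) (w i b phi * Q i b) * (2 * dp i * A i b).
  rewrite /ste big_distrr /=; apply: eq_bigr => i _.
  rewrite (@DL_eq _ _ _ _ _ ML) /bern_weight (bigD1 i) //= /A /Q /w /dp /prob_one.
  ring.
rewrite /expect; under [RHS]eq_bigr => b _ do rewrite HR.
under [LHS]eq_bigr => b _ do rewrite big_distrl.
rewrite [LHS]exchange_big [RHS]exchange_big /=; apply: eq_bigr => i _.
have Lsetflip b t : Lset L i (@sgn_vec R n (flipb i b)) t = Lset L i (@sgn_vec R n b) t.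
  rewrite /Lset; congr L; apply/rowP => k; rewrite !mxE.
  case: eqP => // /eqP ki; by rewrite flipb_k.
apply: (@flip_key R n i (F (a phi ord0 i)) (dp i) (Q i) (A i) (B i)
   (fun b => L (@sgn_vec R n b))).
- move=> b; apply: eq_bigr => k ki; by rewrite /w flipb_k.
- by move=> b; rewrite /A !Lsetflip.
- by move=> b; rewrite /B !Lsetflip.
- move=> b; rewrite /A /B -(@Lset_affine _ _ _ _ _ ML) /Lset; congr L.
  apply/rowP => k; rewrite !mxE; case: eqP => [->|] //.
Qed.
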